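(* Consider Algorithm F (Filter) run on an input set $S$ of initial size $m$ and a hypothesis $h$. In each iteration of its while-loop in which the support instances $x^-,x^+$ are identified, with probability at least $1-\frac{1}{m^{50}}$ the interval $[x^-,x^+]$ (with respect to the ordering induced by $Z^*$) contains less than a $1/2$ fraction of the unfiltered instances (the instances currently in $S$).
   Context: Instances lie in $\mathbb{R}^d$ and are totally ordered by the ground-truth comparison function $Z^*(x,x')=\mathrm{sign}(w^*\cdot(x-x'))$, where $h^*(x)=\mathrm{sign}(w^*\cdot x)$ is the target halfspace. Oracle $\mathcal{O}_L$ on input $x$ returns (from a fresh random worker) $h^*(x)$ with probability $\ge\frac12+\alpha$; oracle $\mathcal{O}_C$ on $(x,x')$ returns $Z^*(x,x')$ with probability $\ge\frac12+\beta$; $\alpha,\beta\in(0,\frac12]$. Algorithm A (Compare-and-Label) on $(S,\delta)$: sorts $S$ by randomized quicksort with each comparison decided by majority of $O(\beta^{-2}\log(|S|/\delta))$ calls to $\mathcal{O}_C$, then binary searches the sorted list for the $-1/+1$ threshold labeling probed instances by majority of $O(\alpha^{-2}\log(\log|S|/\delta))$ calls to $\mathcal{O}_L$, and labels accordingly. Algorithm F (Filter) on input a set $S$ (initial size $m$) and hypothesis $h$: $b=100\log m$, $\delta'=0.001/\log m$, $N=O(\log(1/\epsilon))$, $S_I=\emptyset$. While $S\neq\emptyset$: if $|S|\le b$, run Algorithm A on $(S,\delta')$, add to $S_I$ the instances whose label differs from $h$, and stop. Otherwise sample uniformly a subset $S_p\subset S$ of $b$ points, run Algorithm A on $(S_p,\delta')$,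 let $x^-$ (support instance) be the rightmost instance of $S_p$ labeled $-1$ and $x^+$ the leftmost labeled $+1$. For each $x\in S\setminus S_p$: for $t=1,\dots,N$, obtain from a fresh worker tags $Z_t(x,x^-)$, $Z_t(x,x^+)$; for odd $t$: if $\mathrm{Maj}(Z_{1:t}(x,x^-))=1$ and $\mathrm{Maj}(Z_{1:t}(x,x^+))=-1$, stop processing $x$ (it stays in $S$); else if [$\mathrm{Maj}(Z_{1:t}(x,x^-))=-1$ and $h(x)=-1$] or [$\mathrm{Maj}(Z_{1:t}(x,x^+))=+1$ and $h(x)=+1$], put $x$ in $S'$ and stop. If all $N$ rounds pass without stopping, put $x$ into $S_I$. Remove $S_I\cup S'\cup S_p$ from $S$. Return $S_I$.
   Formalization: The probability is only over the uniform b-point sample $S_p$ of the current $S$, and $x^-$, $x^+$ are the $Z^*$-rightmost sampled point with $h^*=-1$ and leftmost with $h^*=+1$ (Algorithm A correct); b = ⌈100 ln m⌉. Apart from conventions, each condition added here is assumed in the paper as well or is needed for the statement above to hold. *)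

(* Defs.v *)
From HB Require Import structures.
From mathcomp Require Import all_boot all_order all_algebra.
From mathcomp Require Import all_classical all_reals all_analysis.
Set Implicit Arguments. Unset Strict Implicit. Unset Printing Implicit Defensive.
Import Order.TTheory GRing.Theory Num.Theory.
Local Open Scope ring_scope.

Section FilterDefs.
Variables (R : realType) (d : nat).

(* w* . x : the score inducing the ground-truth order Z* *)
Definition score (w x : 'rV[R]_d) : R := \sum_(i < d) w 0 i * x 0 i.

(* h*(x) = +1  <->  hstar w x = true ;  h*(x) = -1  <->  hstar w x = false *)
Definition hstar (w x : 'rV[R]_d) : bool := 0 < score w x.

(* Parameter b = 100 log m of Algorithm F (natural log, rounded up). *)
Definition filter_b (m : nat) : nat := `|Num.ceil (100 * ln (m%:R : R))|%N.

Variables (w : 'rV[R]_d) (s : seq 'rV[R]_d).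
Let n := size s.
Definition pt (i : 'I_n) : 'rV[R]_d := nth 0 s i.
Definition sc (i : 'I_n) : R := score w (pt i).
Definition lab (i : 'I_n) : bool := hstar w (pt i).

Definition is_support_minus (Sp : {set 'I_n}) (i : 'I_n) : bool :=
  [&& i \in Sp, ~~ lab i & [forall j in Sp, ~~ lab j ==> (sc j <= sc i)]].
Definition is_support_plus (Sp : {set 'I_n}) (i : 'I_n) : bool :=
  [&& i \in Sp, lab i & [forall j in Sp, lab j ==> (sc i <= sc j)]].

Definition interval_count (im ip : 'I_n) : nat :=
  #|[set j : 'I_n | (sc im <= sc j) && (sc j <= sc ip)]|.

Definition bad_sample (Sp : {set 'I_n}) : bool :=
  [exists im, exists ip,
     [&& is_support_minus Sp im, is_support_plus Sp ip &
         (n <= 2 * interval_count im ip)%N]].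

End FilterDefs.

(* Main.v *)
Require Import Defs.
From HB Require Import structures.
From mathcomp Require Import all_boot all_order all_algebra.
From mathcomp Require Import all_classical all_reals all_analysis.
From mathcomp Require Import zify ring lra.
From mathcomp Require Import unstable.
Import Order.TTheory GRing.Theory Num.Theory.
Local Open Scope ring_scope.

Definition Tset (R : realType) d (w : 'rV[R]_d) (s : seq 'rV[R]_d)
  (im ip : 'I_(size s)) : {set 'I_(size s)} :=
  [set j | (sc w im < sc w j) && (sc w j < sc w ip)].
Arguments Tset {R d} w {s} im ip.

Lemma bad_sub (R : realType) d (w : 'rV[R]_d) (s : seq 'rV[R]_d)
  (Sp : {set 'I_(size s)}) :
  uniq s -> {in s &, injective (score w)} -> bad_sample w Sp ->
  exists im ip, Sp \subset ~: Tset w im ip /\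
     ((size s)./2 - 2 <= #|Tset w im ip|)%N.
Proof.
move=> us inj /existsP[im /existsP[ip /and3P[Hm Hp Hn]]].
exists im, ip; split.
  apply/fintype.subsetP => j jS; rewrite !inE negb_and -!leNgt.
  move: Hm Hp => /and3P[_ _ /forallP Hm] /and3P[_ _ /forallP Hp].
  have := Hm j; have := Hp j; rewrite jS /=.
  by case: (lab w j) => /= h1 h2; rewrite ?h1 ?h2 ?orbT.
have scinj : forall i j : 'I_(size s), sc w i = sc w j -> i = j.
  move=> i j e; apply/val_inj/eqP; rewrite -(nth_uniq 0 _ _ us) ?ltn_ord //.
  apply/eqP; apply: (inj); rewrite ?mem_nth ?ltn_ord //.
have sub : [set j | (sc w im <= sc w j) && (sc w j <= sc w ip)] \subset
    Tset w im ip :|: [set im; ip].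
  apply/fintype.subsetP => j; rewrite !inE => /andP[h1 h2].
  rewrite !le_eqVlt in h1 h2.
  case/orP: h1 => [/eqP/scinj ->|h1]; first by rewrite eqxx !orbT.
  case/orP: h2 => [/eqP/scinj ->|h2]; first by rewrite eqxx !orbT.
  by rewrite h1 h2.
have hK := subset_leq_card sub.
have [u _] := leq_card_setU (Tset w im ip) [set im; ip].
have c2 : (#|[set im; ip]| <= 2)%N by rewrite cards2; case: (im != ip).
have hK2 : (interval_count w im ip <= #|Tset w im ip| + 2)%N.
  by apply: (leq_trans hK); apply: (leq_trans u); rewrite leq_add2l.
have : (size s <= 2 * (#|Tset w im ip| + 2))%N.
  by apply: (leq_trans Hn); rewrite leq_mul2l hK2 orbT.
have hh := odd_double_half (size s).
rewrite -addnn in hh.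
move: hh; move: (#|Tset w im ip|) => T.
case: (odd (size s)) => /=; lia.
Qed.

Lemma ffact_ratio a n b : (a <= n)%N -> (a ^_ b * n ^ b <= n ^_ b * a ^ b)%N.
Proof.
move=> an; elim: b => [|b IH]; first by rewrite !ffactn0 !expn0.
rewrite !ffactnSr !expnS.
have h : ((a - b) * n <= (n - b) * a)%N by nia.
have e1 : (a ^_ b * (a - b) * (n * n ^ b) = a ^_ b * n ^ b * ((a - b) * n))%N by ring.
have e2 : (n ^_ b * (n - b) * (a * a ^ b) = n ^_ b * a ^ b * ((n - b) * a))%N by ring.
by rewrite e1 e2 leq_mul.
Qed.

Lemma count_bad (R : realType) d (w : 'rV[R]_d) (s : seq 'rV[R]_d) (b : nat) :
  uniq s -> {in s &, injective (score w)} ->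
  (#|[set Sp : {set 'I_(size s)} | (#|Sp| == b) && bad_sample w Sp]|
    <= size s * size s * 'C(size s - ((size s)./2 - 2), b))%N.
Proof.
move=> us inj.
set n := size s; set L := (n./2 - 2)%N.
pose F (p : 'I_n * 'I_n) : {set {set 'I_n}} :=
  if (L <= #|Tset w p.1 p.2|)%N then
    [set A : {set 'I_n} | A \subset ~: Tset w p.1 p.2 & #|A| == b] else finset.set0.
have sub : [set Sp : {set 'I_n} | (#|Sp| == b) && bad_sample w Sp] \subset
   \bigcup_p F p.
  apply/fintype.subsetP => Sp; rewrite inE => /andP[/eqP cb bad].
  have [im [ip [h1 h2]]] := @bad_sub _ _ _ _ _ us inj bad.
  apply/bigcupP; exists (im, ip) => //.
  by rewrite /F /= h2 inE h1 cb eqxx.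
apply: (leq_trans (subset_leq_card sub)).
apply: (leq_trans (card_big_setU _ _ _)).
have -> : (n * n * 'C(n - L, b) = \sum_(p : 'I_n * 'I_n) 'C(n - L, b))%N.
  by rewrite sum_nat_const card_prod card_ord.
apply: leq_sum => p _; rewrite /F.
case: ifP => hL; last by rewrite cards0.
rewrite cards_draws cardsCs card_ord.
rewrite finset.setCK; apply: leq_bin2l; exact: leq_sub2l.
Qed.

Lemma ln2_ge (R : realType) : 5 / 8 <= ln (2 : R).
Proof.
have h1 : 7 / 8 <= expR (- (1 / 8) : R).
  by apply: le_trans (expR_ge1Dx _); lra.
have h2 : expR (- (5 / 8) : R) = expR (- (1 / 8)) ^+ 5.
  by rewrite -expRM_natl; congr expR; lra.
have h3 : (7 / 8 : R) ^+ 5 <= expR (- (1 / 8)) ^+ 5.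
  by apply: lerXn2r => //; rewrite ?nnegrE ?expR_ge0 //; lra.
have h4 : (1 / 2 : R) <= expR (- (5 / 8)).
  rewrite h2; apply: le_trans h3; rewrite !exprS expr0; lra.
have h5 : ln (1 / 2 : R) <= - (5 / 8).
  rewrite -[X in _ <= X]expRK ler_ln ?posrE ?expR_gt0 //; lra.
move: h5; rewrite mul1r lnV ?posrE //; lra.
Qed.

Lemma real_bound (R : realType) (n m b a : nat) :
  (2 <= m)%N -> (n <= m)%N -> (b < n)%N -> (2 * a <= n + 5)%N ->
  100 * ln (m%:R : R) <= b%:R ->
  (n%:R ^+ 2 * (a%:R / n%:R) ^+ b <= ((m%:R : R) ^+ 50)^-1).
Proof.
move=> m2 nm bn an hb.
set x : R := m%:R; set N : R := n%:R; set B : R := b%:R; set A : R := a%:R.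
have x2 : 2 <= x by rewrite /x ler_nat.
have x0 : 0 < x by lra.
have N0 : 0 < N by rewrite /N ltr0n; case: n bn nm an {N} => //.
have Nx : N <= x by rewrite /N /x ler_nat.
have BN : B <= N by rewrite /B /N ler_nat ltnW.
have A0 : 0 <= A by rewrite /A ler0n.
have hA2 : 2 * A <= N + 5.
  by have := an; rewrite -(ler_nat R) natrM natrD.
have l2 := ln2_ge R.
have lx : ln 2 <= ln x by rewrite ler_ln ?posrE //; lra.
set L := ln x; set l := ln (2 : R).
have hb' : 100 * L <= B := hb.
have lx' : l <= L := lx.
have l2' : 5 / 8 <= l := l2.
have hA : A / N <= expR (5 / N - l).
  rewrite expRD expRN /l lnK ?posrE //.
  rewrite ler_pdivrMr //.
  have hE := expR_ge1Dx (5 / N).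
  have tN : 5 / N * N = 5 by field; rewrite gt_eqF.
  move: hE tN; set E := expR (5 / N); set t := 5 / N => hE tN.
  nra.
have hq : (A / N) ^+ b <= expR (B * (5 / N - l)).
  rewrite /B expRM_natl; apply: lerXn2r => //; rewrite ?nnegrE ?expR_ge0 //.
  by apply: divr_ge0 => //; lra.
have hN2 : N ^+ 2 <= expR (2 * L).
  rewrite expRM_natl /L lnK ?posrE //.
  by apply: lerXn2r => //; rewrite nnegrE; lra.
have hR : (x ^+ 50)^-1 = expR (- (50 * L)).
  by rewrite expRN expRM_natl /L lnK ?posrE.
rewrite hR.
apply: le_trans (ler_pM _ _ hN2 hq) _.
- by rewrite exprn_ge0 //; lra.
- by rewrite exprn_ge0 // divr_ge0 //; lra.
rewrite -expRD ler_expR.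
have hb5 : B * (5 / N) <= 5.
  rewrite mulrA ler_pdivrMr // mulrC ler_pM2l //.
have p1 : 0 <= (B - 100 * L) * l.
  by apply: mulr_ge0; lra.
have p2 : 0 <= (l - 5 / 8) * L by apply: mulr_ge0; lra.
nra.
Qed.

Lemma ratio_le (R : realType) (n a b : nat) : (a <= n)%N -> (b <= n)%N -> (0 < n)%N ->
  ('C(a, b)%:R / 'C(n, b)%:R <= ((a%:R / n%:R) ^+ b : R)).
Proof.
move=> an bn n0.
have Cn : (0 : R) < 'C(n, b)%:R by rewrite ltr0n bin_gt0.
have Nb : (0 : R) < n%:R ^+ b by rewrite exprn_gt0 // ltr0n.
have h : ('C(a, b) * n ^ b <= 'C(n, b) * a ^ b)%N.
  have := @ffact_ratio a n b an; rewrite -!bin_ffact.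
  by rewrite mulnAC [X in (_ <= X)%N -> _]mulnAC leq_pmul2r ?fact_gt0.
rewrite expr_div_n ler_pdivrMr // mulrAC ler_pdivlMr //.
by move: h; rewrite -(ler_nat R) !natrM !natrX mulrC [X in _ -> _ <= X]mulrC.
Qed.

Theorem lemma12 (R : realType) (d : nat) (w : 'rV[R]_d) (m : nat)
    (s : seq 'rV[R]_d) :
  uniq s ->
  {in s &, injective (score w)} ->
  (size s <= m)%N ->
  (filter_b R m < size s)%N ->
  (#|[set Sp : {set 'I_(size s)} |
        (#|Sp| == filter_b R m) && bad_sample w Sp]|%:R : R)
    / ('C(size s, filter_b R m))%:R
  <= ((m%:R : R) ^+ 50)^-1.
Proof.
move=> us inj sm bs.
have cnt := @count_bad R d w s (filter_b R m) us inj.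
have hb : (2 <= m)%N -> 100 * ln (m%:R : R) <= (filter_b R m)%:R.
  move=> m2; have l0 : 0 <= ln (m%:R : R) by rewrite ln_ge0 // ler1n ltnW.
  rewrite /filter_b natr_absz ger0_norm ?ceil_ge // ceil_ge0; lra.
move: bs cnt hb.
move: (#|_|) => c.
move: (filter_b R m) (@real_bound R (size s) m (filter_b R m) (size s - ((size s)./2 - 2))) => b rb bs cnt hb.
move: (size s) sm bs cnt rb => n sm bs cnt rb.
have Cn : (0 : R) < 'C(n, b)%:R by rewrite ltr0n bin_gt0 ltnW.
apply: le_trans (_ : (n * n * 'C(n - (n./2 - 2), b))%:R / 'C(n, b)%:R <= _).
  by apply: ler_wpM2r; [rewrite invr_ge0 ltW | rewrite ler_nat].
case: (leqP m 1) => hm.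
  have e1 : n = 1%N by lia.
  have e2 : m = 1%N by lia.
  have e3 : b = 0%N by lia.
  by rewrite e1 e2 e3 !bin0 !muln1 divr1 expr1n invr1.
have an : (2 * (n - (n./2 - 2)) <= n + 5)%N.
  have hh := odd_double_half n; rewrite -addnn in hh.
  by move: hh; case: (odd n) => /=; lia.
apply: le_trans (rb hm sm bs an (hb hm)).
rewrite !natrM expr2 -!mulrA.
have n0 : (0 : R) <= n%:R by rewrite ler0n.
apply: ler_wpM2l => //; apply: ler_wpM2l => //.
apply: ratio_le; [exact: leq_subr | exact: ltnW | by case: n bs {cnt sm rb an Cn n0}].
Qed.
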